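(* Let $\sigma\in S_k$ be a $213$-avoiding permutation, i.e. there are no $1\le i_1<i_2<i_3\le k$ with $\sigma(i_2)<\sigma(i_1)<\sigma(i_3)$. Then there exists a strongly regular bi-sequence $\mathcal A$ of length $k$ such that $\sigma=\sigma_0(\mathcal A)$.
   Context: A bi-sequence of length $k$ is a pair $\mathcal A=\begin{pmatrix}a_1&\cdots&a_k\\ b_1&\cdots&b_k\end{pmatrix}$ of integer sequences with $a_1\le\cdots\le a_k$, $b_1\ge\cdots\ge b_k$, and $a_i\le b_{k+1-i}+1$ for all $i$. It is regular if the $a_i$ are pairwise distinct and the $b_i$ are pairwise distinct; it is strongly regular if it is regular and $\{a_1,\dots,a_k\}\cap\{b_1+1,\dots,b_k+1\}=\emptyset$. The permutation $\sigma_0(\mathcal A)\in S_k$ is defined recursively for $i=k,k-1,\dots,1$ by $\sigma_0^{-1}(i)=\max\{j\notin\sigma_0^{-1}(\{i+1,\dots,k\}) : a_j\le b_i+1\}$. *)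

(* Defs.v *)
(* Indices are 0-based: position i (1-based) is the ordinal i-1 : 'I_k. *)
From HB Require Import structures.
From mathcomp Require Import all_boot all_order all_algebra all_fingroup.
Set Implicit Arguments. Unset Strict Implicit. Unset Printing Implicit Defensive.
Import Order.TTheory GRing.Theory Num.Theory.
Local Open Scope ring_scope.

(* A bi-sequence of length k: a pair (a, b) of integer sequences indexed by 'I_k,
   a nondecreasing, b nonincreasing, and a_i <= b_{k+1-i} + 1 (1-based), i.e.
   a i <= b (rev_ord i) + 1 (0-based). *)
Definition bisequence (k : nat) (a b : 'I_k -> int) : Prop :=
  [/\ (forall i j : 'I_k, (i <= j)%N -> a i <= a j),
      (forall i j : 'I_k, (i <= j)%N -> b j <= b i) &
      (forall i : 'I_k, a i <= b (rev_ord i) + 1)].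

Definition regular_bisequence (k : nat) (a b : 'I_k -> int) : Prop :=
  [/\ bisequence a b, injective a & injective b].

Definition strongly_regular_bisequence (k : nat) (a b : 'I_k -> int) : Prop :=
  regular_bisequence a b /\ (forall i j : 'I_k, a i <> b j + 1).

(* sigma = sigma_0(a,b): for every i (processed from k down to 1),
   sigma^{-1}(i) is the maximum of
   { j | j not in sigma^{-1}({i+1,...,k}) and a_j <= b_i + 1 }. *)
Definition sigma0_set (k : nat) (a b : 'I_k -> int) (s : 'S_k) (i j : 'I_k) : Prop :=
  (forall i' : 'I_k, (i < i')%N -> (s^-1)%g i' <> j) /\ a j <= b i + 1.

Definition is_sigma0 (k : nat) (a b : 'I_k -> int) (s : 'S_k) : Prop :=
  forall i : 'I_k,
    sigma0_set a b s i ((s^-1)%g i) /\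
    (forall j : 'I_k, sigma0_set a b s i j -> (j <= (s^-1)%g i)%N).

Definition avoids213 (k : nat) (s : 'S_k) : Prop :=
  ~ exists i1 i2 i3 : 'I_k,
      [/\ (i1 < i2)%N, (i2 < i3)%N, (s i2 < s i1)%N & (s i1 < s i3)%N].

(* Main.v *)
Require Import Defs.
From mathcomp Require Import all_boot all_order all_algebra all_fingroup.
From mathcomp Require Import zify.
Import Order.TTheory GRing.Theory Num.Theory.

Section Aux.
Variables (k : nat) (s : 'S_k).

Definition Mx (i : 'I_k) : nat := \big[maxn/0%N]_(i' : 'I_k | (i <= i')%N) (s^-1)%g i'.

Lemma Mx_ge (i i' : 'I_k) : (i <= i')%N -> ((s^-1)%g i' <= Mx i)%N.
Proof. by move=> h; apply: (leq_bigmax_cond (P := fun x : 'I_k => (i <= x)%N)). Qed.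

Lemma Mx_mono (i j : 'I_k) : (i <= j)%N -> (Mx j <= Mx i)%N.
Proof.
move=> h; apply/bigmax_leqP => i' hi'; apply: Mx_ge; exact: leq_trans hi'.
Qed.

Lemma Mx_wit (i : 'I_k) : exists q : 'I_k, (i <= q)%N /\ Mx i = (s^-1)%g q.
Proof.
rewrite /Mx (bigop.bigmax_eq_arg i) //.
case: arg_maxnP => //= q Pq _; by exists q.
Qed.

Lemma Mx_card (i : 'I_k) : (k - i <= (Mx i).+1)%N.
Proof.
have hk : forall z : 'I_(k - i), (i + z < k)%N.
  by move=> z; have := ltn_ord z; have := ltn_ord i; lia.
have hv : forall z : 'I_(k - i), val (insubd i (i + z)%N : 'I_k) = (i + z)%N.
  by move=> z; apply: insubdK; exact: hk.
have hb : forall z : 'I_(k - i), ((s^-1)%g (insubd i (i + z)%N) < (Mx i).+1)%N.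
  by move=> z; rewrite ltnS; apply: Mx_ge; rewrite hv leq_addr.
pose g (x : 'I_(k - i)) : 'I_(Mx i).+1 :=
  inord ((s^-1)%g (insubd i (i + x)%N)).
have := leq_card g; rewrite !card_ord; apply => x y.
rewrite /g => /(congr1 val) /=.
rewrite !inordK ?hb //.
move/val_inj/perm_inj/(congr1 val); rewrite !hv => /eqP; rewrite eqn_add2l => /eqP h; exact: val_inj.
Qed.

End Aux.
Arguments Mx {k} s i.
Arguments Mx_ge {k} s {i i'}.
Arguments Mx_mono {k} s {i j}.
Arguments Mx_wit {k} s i.
Arguments Mx_card {k} s i.

Theorem mainTheorem3 (k : nat) (s : 'S_k) :
  avoids213 s ->
  exists a b : 'I_k -> int, strongly_regular_bisequence a b /\ is_sigma0 a b s.
Proof.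
move=> av.
exists (fun j : 'I_k => Posz (k.+1 * j)%N),
       (fun i : 'I_k => (Posz (k.+1 * Mx s i + (k - i))%N - 1)%R).
have Hab : forall (i j : 'I_k),
   (Posz (k.+1 * j)%N <= Posz (k.+1 * Mx s i + (k - i))%N - 1 + 1)%R <-> (j <= Mx s i)%N.
  move=> i j; rewrite subrK lez_nat; split => h.
  - rewrite leqNgt; apply/negP => hl.
    have : (k.+1 * (Mx s i).+1 <= k.+1 * j)%N by rewrite leq_mul2l.
    have := ltn_ord i; lia.
  - have : (k.+1 * j <= k.+1 * Mx s i)%N by rewrite leq_mul2l h orbT.
    lia.
split; first split; first split.
- split.
  + by move=> i j h; rewrite lez_nat leq_mul2l h orbT.
  + move=> i j h; have := Mx_mono s h; have := ltn_ord j.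
    have : (k.+1 * Mx s j <= k.+1 * Mx s i)%N by rewrite leq_mul2l Mx_mono ?orbT.
    lia.
  + move=> i; apply/Hab; have := Mx_card s (rev_ord i); rewrite /=.
    have := ltn_ord i; lia.
- move=> i j /= /eqP; rewrite eqz_nat => /eqP h; apply: val_inj.
  move: h => /eqP; rewrite eqn_mul2l /= => /eqP; done.
- move=> i j /= h.
  wlog lij : i j h / (i <= j)%N.
    move=> W; case: (leqP i j) => hh; first exact: W.
    by apply/esym/W; [rewrite h | apply: ltnW].
  apply: val_inj; apply/eqP; rewrite eqn_leq lij /=; rewrite leqNgt; apply/negP => lt.
  have hm := Mx_mono s lij.
  have : (k.+1 * Mx s j <= k.+1 * Mx s i)%N by rewrite leq_mul2l hm orbT.
  have := ltn_ord j; move: h; lia.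
- move=> i j /eqP; rewrite subrK eqz_nat => /eqP h.
  have := ltn_ord i; have := ltn_ord j.
  case: (leqP i (Mx s j)) => hh.
  + have : (k.+1 * i <= k.+1 * Mx s j)%N by rewrite leq_mul2l hh orbT.
    lia.
  + have : (k.+1 * (Mx s j).+1 <= k.+1 * i)%N by rewrite leq_mul2l hh orbT.
    lia.
- move=> i; split.
  + split; last by apply/Hab; apply: Mx_ge.
    move=> i' lt /perm_inj h; move: lt; rewrite h ltnn //.
  + move=> j [hnot /Hab hj].
    rewrite leqNgt; apply/negP => lt.
    have [q [iq Mq]] := Mx_wit s i.
    have sj : (s j < i)%N.
      rewrite ltnNge leq_eqVlt; apply/negP => /orP [/eqP e|e].
      * move: lt; have -> : j = (s^-1)%g i by rewrite (_ : i = s j) ?permK //; apply: val_inj.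
        by rewrite ltnn.
      * by apply: (hnot _ e); rewrite permK.
    have qi : (i < q)%N.
      rewrite ltn_neqAle iq andbT; apply/negP => /eqP e.
      have eq : q = i by apply: val_inj.
      by move: hj lt; rewrite Mq eq; lia.
    have jr : (j < (s^-1)%g q)%N.
      rewrite ltn_neqAle -Mq hj andbT; apply/negP => /eqP e.
      by apply: (hnot q qi); apply: val_inj; rewrite /= -Mq e.
    apply: av; exists ((s^-1)%g i), j, ((s^-1)%g q); split.
    * exact: lt.
    * exact: jr.
    * rewrite permKV; exact: sj.
    * rewrite !permKV; exact: qi.
Qed.
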